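(* Let $\Phi$ be a real, additive gain graph on $\{1,\dots,n\}$ and let $\mathbf{Q}=(Q_1,\dots,Q_n)\in(\mathbb{E}^d)^n$ with $Q_i\neq Q_j$ whenever $i$ and $j$ are adjacent in $\Phi$. Let $C$ be a circle in $\Phi$ and let $\mathcal{C}=\{h(e):e\in C\}\subseteq\mathcal{H}(\Phi;\mathbf{Q})$. If $C$ is unbalanced, then $\bigcap\mathcal{C}=\emptyset$. If $C$ is balanced and $e\in C$, then $\bigcap\mathcal{C}=\bigcap(\mathcal{C}\setminus\{h(e)\})$.
   Context: $\mathbb{E}^d$ is Euclidean $d$-space with distance $d(\cdot,\cdot)$; $\psi_{ij}(P)=d(P,Q_i)^2-d(P,Q_j)^2$. A real, additive gain graph $\Phi$ on vertex set $\{1,\dots,n\}$ is a finite graph (multiple edges allowed, every edge with two distinct endpoints) with gains $\phi(e;i,j)\in\mathbb{R}$ for each edge $e$ with endpoints $i,j$, satisfying $\phi(e;j,i)=-\phi(e;i,j)$. A circle is a simple closed path; it is balanced if the sum of its gains, read in a consistent direction, is $0$. The Pythagorean arrangement $\mathcal{H}(\Phi;\mathbf{Q})$ consists of the hyperplanes $h(e)=\{P:\psi_{ij}(P)=\phi(e;i,j)\}$, one for each edge $e$ with endpoints $i,j$. *)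

(* Defs.v *)
From HB Require Import structures.
From mathcomp Require Import all_boot all_order all_algebra.
From mathcomp Require Import classical_sets.
Set Implicit Arguments. Unset Strict Implicit. Unset Printing Implicit Defensive.
Import Order.TTheory GRing.Theory Num.Theory.
Local Open Scope ring_scope.

(* Euclidean d-space E^d is modelled as row vectors 'rV[R]_d over a real field.
   sqdist P Q = d(P,Q)^2 (the usual Euclidean squared distance). *)
Definition sqdist (R : realFieldType) (d : nat) (P Q : 'rV[R]_d) : R :=
  \sum_(k < d) (P ord0 k - Q ord0 k) ^+ 2.

Definition psi (R : realFieldType) (n d : nat) (Q : 'I_n -> 'rV[R]_d)
  (i j : 'I_n) (P : 'rV[R]_d) : R :=
  sqdist P (Q i) - sqdist P (Q j).

(* A gain graph on {1..n} (here 'I_n) is given by a finite edge type E, endpoint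
   maps src, tgt (with src e != tgt e) and g e = phi(e; src e, tgt e).
   gain_of gives phi(e; i, j), with phi(e; tgt e, src e) = - g e. *)
Definition gain_of (R : realFieldType) (n : nat) (E : finType)
  (src tgt : E -> 'I_n) (g : E -> R) (e : E) (i j : 'I_n) : R :=
  if (i == src e) && (j == tgt e) then g e
  else if (i == tgt e) && (j == src e) then - g e else 0.

(* The hyperplane h(e) = {P : psi_{ij}(P) = phi(e;i,j)} (independent of the
   orientation since psi_ji = - psi_ij). *)
Definition hyp (R : realFieldType) (n d : nat) (E : finType)
  (src tgt : E -> 'I_n) (g : E -> R) (Q : 'I_n -> 'rV[R]_d) (e : E)
  : set 'rV[R]_d :=
  [set P | psi Q (src e) (tgt e) P = g e].

(* The steps (e_k, (v_k, v_{k+1 mod m})) of a closed walk v_0 e_0 v_1 ... e_{m-1} v_0. *)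
Definition circ_steps (n : nat) (E : finType) (vs : seq 'I_n) (es : seq E)
  : seq (E * ('I_n * 'I_n)) := zip es (zip vs (rot 1 vs)).

Definition joins (n : nat) (E : finType) (src tgt : E -> 'I_n)
  (e : E) (a b : 'I_n) : bool :=
  ((src e == a) && (tgt e == b)) || ((src e == b) && (tgt e == a)).

Definition is_circle (n : nat) (E : finType) (src tgt : E -> 'I_n)
  (vs : seq 'I_n) (es : seq E) : Prop :=
  [/\ (0 < size vs)%N, size es = size vs, uniq vs, uniq es &
      all (fun t => joins src tgt t.1 t.2.1 t.2.2) (circ_steps vs es)].

Definition balanced (R : realFieldType) (n : nat) (E : finType)
  (src tgt : E -> 'I_n) (g : E -> R) (vs : seq 'I_n) (es : seq E) : Prop :=
  \sum_(t <- circ_steps vs es) gain_of src tgt g t.1 t.2.1 t.2.2 = 0.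

(* Main.v *)
Require Import Defs.
From HB Require Import structures.
From mathcomp Require Import all_boot all_order all_algebra.
From mathcomp Require Import classical_sets.
Import Order.TTheory GRing.Theory Num.Theory.
Local Open Scope ring_scope.
Local Open Scope classical_set_scope.

Lemma psi_sum0 (R : realFieldType) (n d : nat) (E : finType)
  (Q : 'I_n -> 'rV[R]_d) (vs : seq 'I_n) (es : seq E) (P : 'rV[R]_d) :
  size es = size vs ->
  \sum_(t <- circ_steps vs es) psi Q t.2.1 t.2.2 P = 0.
Proof.
move=> hs; rewrite /circ_steps.
rewrite -(big_map snd xpredT (fun t => psi Q t.1 t.2 P)).
have -> : map snd (zip es (zip vs (rot 1 vs))) = zip vs (rot 1 vs).
  by apply: (@unzip2_zip _ _ es); rewrite size_zip size_rot minnn hs.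
rewrite /psi big_split /= sumrN.
rewrite -(big_map fst xpredT (fun v => sqdist P (Q v))).
rewrite -(big_map snd xpredT (fun v => sqdist P (Q v))).
have -> : [seq i.1 | i <- zip vs (rot 1 vs)] = vs by apply: unzip1_zip; rewrite size_rot.
have -> : [seq i.2 | i <- zip vs (rot 1 vs)] = rot 1 vs by apply: unzip2_zip; rewrite size_rot.
by rewrite (perm_big vs (_ : perm_eq (rot 1 vs) vs)) ?perm_rot ?subrr.
Qed.

Lemma step_eq (R : realFieldType) (n d : nat) (E : finType)
  (src tgt : E -> 'I_n) (g : E -> R) (Q : 'I_n -> 'rV[R]_d) e a b P :
  src e != tgt e -> joins src tgt e a b ->
  (psi Q a b P - gain_of src tgt g e a b == 0) = (psi Q (src e) (tgt e) P == g e).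
Proof.
move=> hne /orP [/andP [/eqP ha /eqP hb] | /andP [/eqP ha /eqP hb]];
  subst a b; rewrite /gain_of.
  by rewrite !eqxx /= subr_eq0.
rewrite !eqxx [tgt e == src e]eq_sym (negbTE hne) /=.
have -> : psi Q (tgt e) (src e) P = - psi Q (src e) (tgt e) P by rewrite /psi opprB.
by rewrite opprK addrC subr_eq0 eq_sym.
Qed.

Theorem lemma5p2 (R : realFieldType) (n d : nat) (E : finType)
  (src tgt : E -> 'I_n) (g : E -> R) (Q : 'I_n -> 'rV[R]_d)
  (vs : seq 'I_n) (es : seq E) :
  (forall e, src e != tgt e) ->
  (forall e, Q (src e) != Q (tgt e)) ->
  is_circle src tgt vs es ->
  (~ balanced src tgt g vs es ->
     \bigcap_(e' in [set x | x \in es]) hyp src tgt g Q e' = set0) /\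
  (balanced src tgt g vs es -> forall e, e \in es ->
     \bigcap_(e' in [set x | x \in es]) hyp src tgt g Q e' =
     \bigcap_(e' in [set x | (x \in es) && (x != e)]) hyp src tgt g Q e').
Proof.
move=> hne _ [_ hs _ ues hall].
set steps := circ_steps vs es.
have fst_steps : map fst steps = es.
  by rewrite /steps /circ_steps; apply: unzip1_zip; rewrite size_zip size_rot minnn hs.
have in_es t : t \in steps -> t.1 \in es.
  by move=> ht; rewrite -fst_steps; apply: map_f.
have jt t : t \in steps -> joins src tgt t.1 t.2.1 t.2.2 by move=> ht; exact: (allP hall).
pose f P t := psi Q t.2.1 t.2.2 P - gain_of src tgt g t.1 t.2.1 t.2.2.
have sumf P : \sum_(t <- steps) f P t = - \sum_(t <- steps) gain_of src tgt g t.1 t.2.1 t.2.2.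
  by rewrite /f sumrB psi_sum0 // sub0r.
have fz P t : t \in steps -> (f P t == 0) = (psi Q (src t.1) (tgt t.1) P == g t.1).
  by move=> ht; rewrite /f step_eq //; apply: jt.
split.
  move=> hub; apply/seteqP; split => P //= HP; apply: hub.
  rewrite /balanced -/steps; apply/eqP; rewrite -oppr_eq0 -(sumf P).
  apply/eqP; rewrite big_seq big1 // => t ht; apply/eqP.
  by rewrite fz //; apply/eqP; apply: (HP t.1); apply: in_es.
move=> hb e he; apply/seteqP; split => P /= HP.
  by move=> x /andP [hx _]; apply: HP.
move=> x hx; case: (eqVneq x e) => [->|hxe]; last by apply: HP; rewrite /= hx hxe.
have h0 : \sum_(t <- steps) f P t = 0 by rewrite sumf hb oppr0.
rewrite (bigID (fun t => t.1 == e)) /= in h0.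
have h1 : \sum_(i <- steps | i.1 != e) f P i = 0.
  apply: big1_seq => t /andP [hte ht]; apply/eqP; rewrite fz //; apply/eqP; apply: HP.
  by rewrite /= in_es.
rewrite h1 addr0 in h0.
have hf : map fst (filter (fun t => t.1 == e) steps) = [:: e].
  have -> : map fst (filter (fun t => t.1 == e) steps) = filter (pred1 e) (map fst steps).
    by rewrite filter_map.
  by rewrite fst_steps filter_pred1_uniq.
move: hf; case Hfl: (filter _ steps) => [|t0 [|? ?]] //= [ht0].
rewrite -big_filter Hfl big_seq1 in h0.
have ht0s : t0 \in steps.
  have : t0 \in filter (fun t => t.1 == e) steps by rewrite Hfl mem_seq1.
  by rewrite mem_filter => /andP [].
by move/eqP: h0; rewrite fz // ht0 => /eqP.
Qed.
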